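(* Let $(X,\wedge,\vee,\bot,\top)$ be a bounded lattice which is not distributive. Then there exists a sequence $x=(x_1,x_2,x_3)$ of elements of $X$ such that the identity $$P_3(k)=P_{2}(k)\wedge\bigl(P_{2}(k-1)\vee x_3\bigr)$$ fails for some $k\in\{1,2,3\}$, where for $0\le m\le 3$ and $0\le k\le m+1$ $$P_m(k)=\begin{cases}\bot & k=0,\\ \bigwedge_{I\subseteq\{1,\ldots,m\},\ |I|=k}\ \bigvee_{i\in I} x_i & 1\le k\le m,\\ \top & k=m+1.\end{cases}$$
   Context: $\bot$ and $\top$ denote the least and greatest elements of $X$. For $1\le k\le m$, $P_m(k)$ is the $k$-th element of $(x_1,\ldots,x_m)$ sorted with respect to the lattice (meet over $k$-element index subsets of the join of the corresponding entries). *)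

(* Defs.v *)
From mathcomp Require Import all_boot all_order.
Set Implicit Arguments. Unset Strict Implicit. Unset Printing Implicit Defensive.
Import Order.TTheory.
Local Open Scope order_scope.

Definition lattice_distributive d (X : latticeType d) : Prop :=
  forall a b c : X, a `&` (b `|` c) = (a `&` b) `|` (a `&` c).

(* P m x k for the sequence (x 1, ..., x m) (1-based indexing: the entry x_i
   is [x i]; values of x outside 1..m are irrelevant). *)
Definition P d (X : tbLatticeType d) (m : nat) (x : nat -> X) (k : nat) : X :=
  if k == 0%N then \bot
  else if (k <= m)%N then
    \meet_(I : {set 'I_m} | #|I| == k) \join_(i in I) x (val i).+1
  else \top.

(* Main.v *)
Require Import Defs.
From mathcomp Require Import all_boot all_order.
Import Order.TTheory.
Local Open Scope order_scope.

Section S.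
Variables (d : Order.disp_t) (X : tbLatticeType d).

Lemma J1 (n : nat) (a : 'I_n) (F : 'I_n -> X) : \join_(i in [set a]) F i = F a.
Proof. by rewrite big_set1E joinx0. Qed.

Lemma J2 (n : nat) (a b : 'I_n) (F : 'I_n -> X) :
  \join_(i in [set a; b]) F i = F a `|` F b.
Proof. by rewrite joins_setU !J1. Qed.

Lemma P21 (x : nat -> X) : P 2 x 1 = x 1%N `&` x 2%N.
Proof.
rewrite /P /=; apply/le_anti/andP; split.
  rewrite lexI; apply/andP; split.
    by apply: (meets_max (j := [set (@Ordinal 2 0 isT)])); rewrite ?cards1 ?J1.
  by apply: (meets_max (j := [set (@Ordinal 2 1 isT)])); rewrite ?cards1 ?J1.
apply/meetsP => I /cards1P [i ->]; rewrite J1.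
by case: i => [[|[|n]] h] //=; rewrite ?leIl ?leIr.
Qed.

Ltac ordcase i := case: i => [[|[|[|?]]] ?] //=.

Lemma P22 (x : nat -> X) : P 2 x 2 = x 1%N `|` x 2%N.
Proof.
rewrite /P /=; apply/le_anti/andP; split.
  by apply: (meets_max (j := [set (@Ordinal 2 0 isT); (@Ordinal 2 1 isT)])); rewrite ?cards2 ?J2.
apply/meetsP => I /cards2P [i [j [ne ->]]]; rewrite J2.
move: ne; ordcase i; ordcase j => _.
all: by rewrite joinC.
Qed.

Lemma P32 (x : nat -> X) : P 3 x 2 =
  (x 1%N `|` x 2%N) `&` ((x 1%N `|` x 3%N) `&` (x 2%N `|` x 3%N)).
Proof.
rewrite /P /=; apply/le_anti/andP; split.
  rewrite !lexI; apply/and3P; split.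
  - by apply: (meets_max (j := [set (@Ordinal 3 0 isT); (@Ordinal 3 1 isT)])); rewrite ?cards2 ?J2.
  - by apply: (meets_max (j := [set (@Ordinal 3 0 isT); (@Ordinal 3 2 isT)])); rewrite ?cards2 ?J2.
  - by apply: (meets_max (j := [set (@Ordinal 3 1 isT); (@Ordinal 3 2 isT)])); rewrite ?cards2 ?J2.
apply/meetsP => I /cards2P [i [j [ne ->]]]; rewrite J2.
move: ne; ordcase i; ordcase j => _.
all: try solve [ by rewrite leIl | by rewrite joinC leIl
        | by apply: (le_trans (leIr _ _)); rewrite ?leIl ?leIr
        | by apply: (le_trans (leIr _ _)); rewrite joinC ?leIl ?leIr
        | by rewrite (joinC (x 3%N)); apply: (le_trans (leIr _ _)); rewrite leIr ].
Qed.

Lemma dist_of_id :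
  (forall a b c : X, (a `|` b) `&` ((a `|` c) `&` (b `|` c)) = (a `|` b) `&` ((a `&` b) `|` c)) ->
  lattice_distributive X.
Proof.
move=> H.
have md : forall a b c : X, c <= a -> a `&` (b `|` c) = (a `&` b) `|` c.
  move=> a b c ca; have := H a b c.
  rewrite (join_l ca) meetA (meet_r (leUl a b)) => ->.
  rewrite meet_r // leUx (le_trans (leIl a b) (leUl a b)) /=.
  exact: le_trans ca (leUl a b).
move=> a b c; apply/le_anti/andP; split; last first.
  rewrite leUx !lexI; apply/andP; split; apply/andP; split.
  - exact: leIl.
  - exact: le_trans (leIr _ _) (leUl _ _).
  - exact: leIl.
  - exact: le_trans (leIr _ _) (leUr _ _).
have h1 : a `&` (b `|` c) <= (a `|` b) `&` ((a `|` c) `&` (b `|` c)).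
  rewrite !lexI leIr andbT; apply/andP; split.
    exact: le_trans (leIl _ _) (leUl _ _).
  exact: le_trans (leIl _ _) (leUl _ _).
rewrite H (joinC (a `&` b) c) (md _ _ _ (le_trans (leIl a b) (leUl a b))) in h1.
have h2 : a `&` (b `|` c) <= a `&` (((a `|` b) `&` c) `|` (a `&` b)).
  by rewrite lexI leIl h1.
rewrite (md a _ (a `&` b) (leIl a b)) meetA (meet_l (leUl a b)) in h2.
by rewrite (le_trans h2) // joinC.
Qed.
End S.

From Stdlib Require Import Classical.

Theorem proposition3p2 (d : Order.disp_t) (X : tbLatticeType d) :
  ~ lattice_distributive X ->
  exists x : nat -> X, exists k : nat,
    (1 <= k <= 3)%N /\
    P 3 x k <> P 2 x k `&` (P 2 x k.-1 `|` x 3%N).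
Proof.
move=> nd; apply: NNPP => H; apply: nd; apply: dist_of_id => a b c.
pose x := fun n : nat => match n with 1 => a | 2 => b | _ => c end.
apply: NNPP => ne; apply: H; exists x, 2%N; split => //.
by rewrite /= P32 P22 P21.
Qed.
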